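(* For every $h\ge 2$ there are $m_0=m_0(h)$ and $\gamma=\gamma(h)>0$ with the following property. Let $H$ be an oriented graph on $h$ vertices and let $D$ be an oriented graph on vertex set $[k]$, where $2\le k\le h$. Suppose that $H$ has a proper $k$-coloring $V(H)=H_1\cup\dots\cup H_k$ such that $H_i\rightarrow H_j$ for every $(i,j)\in E(D)$. Then for every $m\ge m_0$ there is a $k$-partite tournament $F=(V_1\cup\dots\cup V_k,E(F))$ such that: (1) $|V_i|=m$ for every $i=1,\dots,k$; (2) $V_i\rightarrow V_j$ for every $(i,j)\in E(D)$; (3) every completion of $F$ contains a collection of at least $\gamma m^2$ copies of $H$ with the property that every edge $e\in E(F)$ is contained in at most one of these copies.
   Context: An oriented graph is a directed graph without loops with at most one edge between any two distinct vertices. A proper $k$-coloring of an oriented graph $H$ is a partition of $V(H)$ into $k$ sets each inducing an acyclic digraph. For disjoint vertex sets $X,Y$ of a digraph, $X\rightarrow Y$ means there is no pair $(x,y)\in X\times Y$ with an edge from $y$ to $x$ (i.e. every edge between $X$ and $Y$ goes from $X$ to $Y$; non-adjacent pairs are allowed). A $k$-partite tournament is an orientation of a complete $k$-partite graph with parts $V_1,\dots,V_k$. A completion of a $k$-partite tournament $F$ is any tournament on $V(F)$ agreeing with $F$ on all edges between distinct parts, i.e. obtained from $F$ by adding arbitrary tournaments on $V_1,\dots,V_k$. A copy of $H$ is a (not necessarily induced) subgraph isomorphic to $H$. *)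

(* Defs.v *)
From mathcomp Require Import all_boot.
From Stdlib Require Export Reals.
Set Implicit Arguments.
Unset Strict Implicit.
Unset Printing Implicit Defensive.

Definition oriented (T : finType) (e : rel T) : Prop :=
  (forall x, ~~ e x x) /\ (forall x y, e x y -> ~~ e y x).

Definition acyclic_on (T : finType) (e : rel T) (S : pred T) : Prop :=
  forall s : seq T, s != [::] -> all S s -> ~~ cycle e s.

Definition proper_coloring (T : finType) (e : rel T) (k : nat) (c : T -> 'I_k) : Prop :=
  forall i : 'I_k, acyclic_on e (fun x => c x == i).

Definition arrow (T : finType) (e : rel T) (X Y : pred T) : Prop :=
  forall x y, X x -> Y y -> ~~ e y x.

(* A k-partite tournament with parts V_i = {i} x 'I_m (so |V_i| = m). *)
Definition kpartite_tournament (k m : nat) (eF : rel ('I_k * 'I_m)) : Prop :=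
  oriented eF /\
  (forall u v, u.1 = v.1 -> ~~ eF u v) /\
  (forall u v, u.1 <> v.1 -> eF u v || eF v u).

Definition completion (k m : nat) (eF eT : rel ('I_k * 'I_m)) : Prop :=
  oriented eT /\
  (forall u v, u <> v -> eT u v || eT v u) /\
  (forall u v, u.1 <> v.1 -> eT u v = eF u v).

Definition is_copy (h : nat) (V : finType) (eH : rel 'I_h) (eT : rel V)
  (phi : {ffun 'I_h -> V}) : Prop :=
  injective phi /\ (forall x y, eH x y -> eT (phi x) (phi y)).

Definition copy_vertices (h : nat) (V : finType) (phi : {ffun 'I_h -> V}) : {set V} :=
  [set phi x | x in 'I_h].

Definition copy_edges (h : nat) (V : finType) (eH : rel 'I_h) (phi : {ffun 'I_h -> V})
  : {set V * V} :=
  [set (phi p.1, phi p.2) | p in [set p : 'I_h * 'I_h | eH p.1 p.2]].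

(* Main.v *)
Require Import Defs.
From mathcomp Require Import all_boot.
From Stdlib Require Import Reals.
From mathcomp Require Import zify.
Set Implicit Arguments.
Unset Strict Implicit.
Unset Printing Implicit Defensive.

Lemma sum_count_eq (X : Type) (C : finType) (f : X -> C) (B : seq X) :
  \sum_(c : C) count (fun t => f t == c) B = size B.
Proof.
elim: B => [|b B IH] /=; first by rewrite big1.
rewrite big_split /= IH (bigD1 (f b)) //= eqxx big1 ?addn0 //.
by move=> c /negbTE; rewrite eq_sym => ->.
Qed.

Lemma pigeon (X : Type) (C : finType) (c0 : C) (f : X -> C) (B : seq X) :
  exists c, size B <= #|C| * count (fun t => f t == c) B.
Proof.
pose cm := [arg max_(c > c0) count (fun t => f t == c) B].
exists cm; rewrite -(sum_count_eq f).
rewrite /cm; case: arg_maxnP => // i _ Hi.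
rewrite -sum_nat_const; apply: leq_sum => c _; exact: Hi.
Qed.

Fixpoint gb (n r : nat) : nat := if r is r'.+1 then n * gb n r' + 1 else 0.

Lemma greedy (X : eqType) (lt : rel X) (lt_tr : transitive lt) (C : finType) (c0 : C)
  (f : X -> X -> C) :
  forall r (A : seq X), sorted lt A -> gb #|C| r <= size A ->
  exists Z : seq (X * C), size Z = r /\ all (fun p => p.1 \in A) Z /\
    pairwise (fun p q => lt p.1 q.1 && (f p.1 q.1 == p.2)) Z.
Proof.
elim=> [|r IH] A sA hA; first by exists [::].
case: A sA hA => [|a B] sA hA; first by rewrite /= addn1 ltn0 in hA.
rewrite /= in sA hA.
have [c Hc] := pigeon c0 (f a) B.
pose B' := filter (fun t => f a t == c) B.
have sB' : sorted lt B' by apply: sorted_filter => //; exact: (path_sorted sA).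
have hB' : gb #|C| r <= size B'.
  rewrite size_filter; rewrite addn1 ltnS in hA.
  have := leq_trans hA Hc; rewrite leq_mul2l; case/orP => // /eqP C0.
  by move: (card0_eq C0 c0).
have [Z [sZ [aZ pZ]]] := IH B' sB' hB'.
exists ((a, c) :: Z); split; first by rewrite /= sZ.
split.
  rewrite /= in_cons eqxx /=; apply/allP => p /(allP aZ).
  by rewrite mem_filter => /andP [_ pB]; rewrite inE pB orbT.
rewrite pairwise_cons pZ andbT; apply/allP => p /(allP aZ).
rewrite mem_filter => /andP [/eqP fc pB] /=.
rewrite fc eqxx andbT.
by have := order_path_min lt_tr sA => /allP; apply.
Qed.

Lemma pairwise_in2 (T : eqType) (r : rel T) s x y :
  pairwise r s -> x \in s -> y \in s -> x = y \/ r x y \/ r y x.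
Proof.
elim: s => [|a s IH] //=; move=> /andP [ha hs].
rewrite !inE => /orP [/eqP -> | xs] /orP [/eqP -> | ys]; first by left.
- by right; left; apply: (allP ha).
- by right; right; apply: (allP ha).
- exact: IH.
Qed.

Lemma R1 (L : nat) (C : finType) : exists N1, forall N, N1 <= N ->
  forall g : 'I_N -> 'I_N -> C, exists S : {set 'I_N}, L <= #|S| /\
  exists col, forall s t, s \in S -> t \in S -> s < t -> g s t = col.
Proof.
exists (gb #|C| (#|C| * L)).+1 => N hN g.
have N0 : 0 < N by apply: leq_trans hN.
pose x0 : 'I_N := Ordinal N0.
pose c0 := g x0 x0.
have sA : sorted (fun s t : 'I_N => s < t) (enum 'I_N).
  by have := iota_ltn_sorted 0 N; rewrite -val_enum_ord sorted_map.
have hA : gb #|C| (#|C| * L) <= size (enum 'I_N).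
  by rewrite size_enum_ord; apply: ltnW.
have lt_tr : transitive (fun s t : 'I_N => s < t) by move=> a b c; apply: ltn_trans.
have [Z [sZ [_ pZ]]] := greedy lt_tr c0 g sA hA.
have [c Hc] := pigeon c0 snd Z.
pose Zc := filter (fun p => p.2 == c) Z.
have pZc := pairwise_filter (fun p => p.2 == c) pZ.
have uZ : uniq (map fst Zc).
  apply: (@pairwise_uniq _ (fun s t : 'I_N => s < t)); first by move=> x; rewrite ltnn.
  rewrite pairwise_map; apply: sub_pairwise pZc => p q /andP [pq _].
  exact: pq.
exists [set x in map fst Zc]; split.
  rewrite cardsE (card_uniqP uZ) size_map size_filter.
  move: Hc; rewrite sZ leq_mul2l; case/orP => // /eqP C0.
  by move: (card0_eq C0 c0).
exists c => s t; rewrite !inE => /mapP [p pZ' ->] /mapP [q qZ' ->] st.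
have := pairwise_in2 pZc pZ' qZ'; case=> [E|[/andP [_ /eqP E]|/andP [qp _]]].
- by move: st; rewrite E ltnn.
- by move: pZ'; rewrite mem_filter E => /andP [/eqP].
- by move: (ltn_trans st qp); rewrite ltnn.
Qed.

Lemma PR (d : nat) : forall (L : nat) (C : finType), exists N0, forall N, N0 <= N ->
  forall chi : {ffun 'I_d -> 'I_N} -> {ffun 'I_d -> 'I_N} -> C,
  exists S : 'I_d -> {set 'I_N}, (forall l, L <= #|S l|) /\
  exists col, forall p q : {ffun 'I_d -> 'I_N}, (forall l, p l \in S l) -> (forall l, q l \in S l) ->
     (forall l, p l < q l) -> chi p q = col.
Proof.
elim: d => [|d IH] L C.
  exists 1 => N hN chi.
  pose x0 : 'I_N := Ordinal hN.
  pose p0 : {ffun 'I_0 -> 'I_N} := [ffun=> x0].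
  exists (fun _ => set0); split; first by case.
  exists (chi p0 p0) => p q _ _ _.
  have E : forall r : {ffun 'I_0 -> 'I_N}, r = p0 by move=> r; apply/ffunP; case.
  by rewrite (E p) (E q).
have [N' HN'] := IH L C.
pose C' := {ffun {ffun 'I_d -> 'I_N'} * {ffun 'I_d -> 'I_N'} -> C}.
have [N1 HN1] := R1 L C'.
exists (maxn N' N1) => N; rewrite geq_max => /andP [hle h1] chi.
pose ext (s : 'I_N) (p' : {ffun 'I_d -> 'I_N'}) : {ffun 'I_d.+1 -> 'I_N} :=
  [ffun l => if unlift ord0 l is Some l' then widen_ord hle (p' l') else s].
pose g (s t : 'I_N) : C' := [ffun pq => chi (ext s pq.1) (ext t pq.2)].
have [S0 [cS0 [col' Hcol']]] := HN1 N h1 g.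
have [S' [cS' [col Hcol]]] := HN' N' (leqnn _) (fun p' q' => col' (p', q')).
pose S (l : 'I_d.+1) : {set 'I_N} :=
  if unlift ord0 l is Some l' then [set widen_ord hle x | x in S' l'] else S0.
exists S; split.
  move=> l; rewrite /S; case: unliftP => [l' _|_] //.
  by rewrite card_imset // => x y /(congr1 val) /= /val_inj.
exists col => p q pS qS pq.
have narrow : forall r : {ffun 'I_d.+1 -> 'I_N}, (forall l, r l \in S l) ->
    exists r' : {ffun 'I_d -> 'I_N'}, (forall l', r' l' \in S' l') /\ r = ext (r ord0) r'.
  move=> r rS.
  have : forall l' : 'I_d, exists x : 'I_N', x \in S' l' /\ widen_ord hle x = r (lift ord0 l').
    move=> l'; have := rS (lift ord0 l'); rewrite /S liftK.
    by case/imsetP => x xS ->; exists x.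
  case/fin_all_exists => f Hf.
  exists [ffun l' => f l']; split; first by move=> l'; rewrite ffunE; case: (Hf l').
  apply/ffunP => l; rewrite !ffunE; case: unliftP => [l' ->|->] //.
  by rewrite ffunE; case: (Hf l').
have [p' [p'S Ep]] := narrow p pS.
have [q' [q'S Eq]] := narrow q qS.
have H1 : chi p q = col' (p', q').
  have := Hcol' (p ord0) (q ord0).
  move: (pS ord0) (qS ord0) (pq ord0); rewrite /S unlift_none => p0S q0S pq0.
  move=> /(_ p0S q0S pq0) /ffunP /(_ (p', q')); rewrite ffunE /= => <-.
  by rewrite -Ep -Eq.
rewrite H1; apply: Hcol => // l'.
have := pq (lift ord0 l'); rewrite Ep Eq /ext !ffunE liftK.
by [].
Qed.
Section Key.
Variables (h k : nat) (eH : rel 'I_h) (c : 'I_h -> 'I_k).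
Hypothesis pc : proper_coloring eH c.

Definition eS : rel 'I_h := fun x y => eH x y && (c x == c y).
Definition anc (x : 'I_h) : nat := #|[set z | connect eS z x]|.
Definition key (x : 'I_h) : nat := anc x * h + x.

Lemma path_class a p : path eS a p -> all (fun z => c z == c a) p.
Proof.
elim: p a => [|b p IH] a //= /andP [/andP [_ /eqP ab] pp].
rewrite -ab eqxx /=; have := IH b pp; by rewrite ab.
Qed.

Lemma key_lt x y : eH x y -> c x = c y -> key x < key y.
Proof.
move=> exy cxy.
have sub : [set z | connect eS z x] \proper [set z | connect eS z y].
  apply/properP; split.
    apply/subsetP => z; rewrite !inE => zx.
    apply: connect_trans zx _; apply: connect1; by rewrite /eS exy cxy eqxx.
  exists y; rewrite !inE ?connect0 //.
  apply/negP => /connectP [p pp yl].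
  have cyc : cycle eS (y :: p).
    by rewrite /= rcons_path pp -yl /eS exy cxy eqxx.
  have := @pc (c y) (y :: p) isT; rewrite /= eqxx /= path_class // => /(_ isT) /negP H; apply: H.
  by apply: sub_cycle cyc => a b /andP [].
have := proper_card sub; rewrite /key -/(anc x) -/(anc y) => lt.
have := ltn_ord x; have := ltn_ord y; nia.
Qed.

Lemma anc_le x : anc x <= h.
Proof. by rewrite /anc; apply: leq_trans (max_card _) _; rewrite card_ord. Qed.

Lemma key_le x : key x < h * h + h.
Proof. have := anc_le x; have := ltn_ord x; rewrite /key; nia. Qed.

Lemma key_inj x y : key x = key y -> x = y.
Proof.
move=> E; apply: val_inj.
have := congr1 (modn^~ h) E; rewrite /key /= !modnMDl !modn_small //.
Qed.

End Key.

Definition inX h n (z : 'I_h) (p q : {ffun 'I_(h+h) -> 'I_n}) : bool :=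
  (p (rshift h z) < q (rshift h z)) && (q (lshift h z) < p (lshift h z)).

Definition Edec h k n (eH : rel 'I_h) (c : 'I_h -> 'I_k) (i : 'I_k)
  (p : {ffun 'I_(h+h) -> 'I_n}) (j : 'I_k) (q : {ffun 'I_(h+h) -> 'I_n}) : bool :=
  [exists z, exists w, [&& c z == i, c w == j, inX z p q, inX w q p & eH w z]].

Definition Fstar h k n (eH : rel 'I_h) (eD : rel 'I_k) (c : 'I_h -> 'I_k)
  : rel ('I_k * {ffun 'I_(h+h) -> 'I_n}) := fun u v =>
  if u.1 == v.1 then false else if eD u.1 v.1 then true
  else if eD v.1 u.1 then false
  else if u.1 < v.1 then ~~ Edec eH c u.1 u.2 v.1 v.2 else Edec eH c v.1 v.2 u.1 u.2.

Lemma arith_dec W sa sz sb : sb < W ->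
  ((2*W*sa + W < 2*W*sz + W + 1 + sb) && (2*W*sz + sb < 2*W*sa + W)) = (sa == sz).
Proof.
move=> sbW; have [H|H|H] := ltngtP sa sz.
- apply: negbTE; apply/negP => /andP [_ H2]; nia.
- apply: negbTE; apply/negP => /andP [H1 _]; nia.
- rewrite ?H ?eqxx; apply/andP; split; nia.
Qed.

Lemma core h : 0 < h -> exists n, forall k (hk : k <= h) (eH : rel 'I_h) (eD : rel 'I_k)
  (c : 'I_h -> 'I_k), oriented eH -> oriented eD -> proper_coloring eH c ->
  (forall i j, eD i j -> arrow eH (fun x => c x == i) (fun x => c x == j)) ->
  forall T : rel ('I_k * {ffun 'I_(h+h) -> 'I_n.+1}),
  (forall u v, u <> v -> T u v || T v u) ->
  (forall u v, u.1 <> v.1 -> T u v = Fstar eH eD c u v) ->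
  exists psi : {ffun 'I_h -> 'I_k * {ffun 'I_(h+h) -> 'I_n.+1}},
    is_copy eH T psi /\ forall x, (psi x).1 = c x.
Proof.
move=> h0.
pose W := h * h + h + 1.
pose B := 2 * W * (W + 1).
have [N0 HN0] := PR (h + h) B {ffun 'I_h -> bool}.
exists N0 => k hk eH eD c oH oD pc Darr T Ttot Tcross.
pose chi (p q : {ffun 'I_(h+h) -> 'I_N0.+1}) :=
  [ffun j' : 'I_h => [exists j : 'I_k, (widen_ord hk j == j') && T (j, p) (j, q)]].
have [S [cS [col Hcol]]] := HN0 N0.+1 (leqnSn _) chi.
pose beta j := col (widen_ord hk j).
have Hbeta : forall j (p q : {ffun 'I_(h+h) -> 'I_N0.+1}), (forall l, p l \in S l) -> (forall l, q l \in S l) ->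
    (forall l, p l < q l) -> T (j, p) (j, q) = beta j.
  move=> j p q pS qS pq; rewrite /beta -(Hcol p q pS qS pq) ffunE.
  apply/idP/existsP => [Tj|[j0 /andP [/eqP E Tj]]]; first by exists j; rewrite eqxx.
  suff -> : j = j0 by [].
  by apply: val_inj; move/(congr1 val): E.
pose bigK := h * h + h.
pose skey x := if beta (c x) then key eH c x else bigK - key eH c x.
have skW : forall x, skey x < W.
  move=> x; have := key_le eH c x; rewrite /skey /W /bigK; case: (beta _); lia.
have skinj : forall x y, c x = c y -> skey x = skey y -> x = y.
  move=> x y cxy; rewrite /skey cxy; have := key_le eH c x; have := key_le eH c y.
  case: (beta _) => Hy Hx E; apply: (key_inj (eH := eH) (c := c)); lia.
have sklt : forall x y, eH x y -> c x = c y ->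
    if beta (c x) then skey x < skey y else skey y < skey x.
  move=> x y exy cxy; have := key_lt pc exy cxy; rewrite /skey -cxy.
  have := key_le eH c x; have := key_le eH c y.
  case: (beta _) => //; rewrite /bigK; lia.
clearbody skey.
pose vm (z x : 'I_h) := if c x == c z then 2 * W * skey x + W else 2 * W * skey z + skey x.
pose vp (z x : 'I_h) :=
  if c x == c z then 2 * W * skey x + W else 2 * W * skey z + W + 1 + skey x.
pose vl (l : 'I_(h+h)) x := match fintype.split l with inl z => vm z x | inr z => vp z x end.
have vlB : forall l x, vl l x < B.
  move=> l x; rewrite /vl; have := skW x.
  case: (fintype.split l) => z; have := skW z; rewrite /vm /vp /B;
    case: (c x == c z) => H1 H2; nia.
have vll : forall z x, vl (lshift h z) x = vm z x.
  by move=> z x; rewrite /vl (unsplitK (inl _ z)).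
have vlr : forall z x, vl (rshift h z) x = vp z x.
  by move=> z x; rewrite /vl (unsplitK (inr _ z)).
pose s l := enum (S l).
have sS : forall l, B <= size (s l) by move=> l; rewrite /s -cardE.
have ssort : forall l, sorted (fun a b : 'I_N0.+1 => a < b) (s l).
  move=> l; have -> : s l = filter (mem (S l)) (enum 'I_N0.+1) by rewrite enumT.
  apply: sorted_filter; first by move=> a b e; apply: ltn_trans.
  by have := iota_ltn_sorted 0 N0.+1; rewrite -val_enum_ord sorted_map.
pose P x : {ffun 'I_(h+h) -> 'I_N0.+1} := [ffun l => nth ord0 (s l) (vl l x)].
have PS : forall x l, P x l \in S l.
  move=> x l; rewrite ffunE -mem_enum; apply: mem_nth; exact: leq_trans (vlB l x) (sS l).
have Pmono : forall x y l, (P x l < P y l) = (vl l x < vl l y).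
  move=> x y l; rewrite !ffunE.
  have tr : transitive (fun a b : 'I_N0.+1 => a < b) by move=> a b e; apply: ltn_trans.
  have hom := sorted_ltn_nth tr ord0 (ssort l).
  have ix : vl l x \in [pred n | n < size (s l)] by rewrite inE (leq_trans (vlB l x)).
  have iy : vl l y \in [pred n | n < size (s l)] by rewrite inE (leq_trans (vlB l y)).
  case: (ltngtP (vl l x) (vl l y)) => H.
  - exact: hom ix iy H.
  - apply/negbTE; rewrite -leqNgt ltnW //; exact: hom iy ix H.
  - by rewrite H ltnn.
have vsame : forall x y l, c x = c y -> (vl l x < vl l y) = (skey x < skey y).
  move=> x y l cxy; rewrite /vl; case: (fintype.split l) => z; rewrite /vm /vp cxy;
    case: (c y == c z); rewrite ?ltn_add2r ?ltn_pmul2l //; nia.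
have dec : forall a b z, c a <> c b -> c z = c a -> inX z (P a) (P b) = (z == a).
  move=> a b z cab cza; rewrite /inX !Pmono (vll z a) (vll z b) (vlr z a) (vlr z b) /vm /vp.
  rewrite -cza eqxx; have -> : (c b == c z) = false by apply/eqP; rewrite cza => /esym.
  rewrite arith_dec ?skW //; apply/eqP/eqP => [E|->] //.
  apply: skinj; [exact: cza | exact: esym E].
exists [ffun x => (c x, P x)]; split; last by move=> x; rewrite ffunE.
split.
  move=> x y; rewrite !ffunE => E.
  have cxy : c x = c y by case: E.
  have E2 : P x = P y by case: E.
  have E3 : P x (rshift h x) = P y (rshift h x) by rewrite E2.
  apply: skinj; first exact: cxy.
  have L1 := vsame _ _ (rshift h x) cxy.
  have L2 := vsame _ _ (rshift h x) (esym cxy).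
  rewrite -(Pmono x y) -(Pmono y x) E3 ltnn in L1 L2.
  by apply/eqP; rewrite eqn_leq leqNgt -L2 leqNgt -L1.
move=> x y exy; rewrite !ffunE.
case: (c x =P c y) => [cxy|cxy].
  have := sklt x y exy cxy; case bx: (beta (c x)) => H.
  - rewrite cxy (Hbeta (c y) (P x) (P y)) -?cxy //; move=> l; by rewrite Pmono vsame.
  - have := Hbeta (c y) (P y) (P x) (PS y) (PS x).
    have yx : forall l, P y l < P x l by move=> l; rewrite Pmono vsame.
    move=> /(_ yx); rewrite -cxy bx => Tf.
    have := Ttot (c x, P x) (c x, P y); rewrite Tf orbF; apply.
    move=> [] /ffunP /(_ (rshift h x)) E; move: (yx (rshift h x)); by rewrite E ltnn.
rewrite Tcross //= /Fstar /=.
have -> : (c x == c y) = false by apply/eqP.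
case: (eD (c x) (c y)) => //.
case eyx: (eD (c y) (c x)).
  by have := Darr _ _ eyx y x (eqxx _) (eqxx _); rewrite exy.
case: ltnP => _.
  apply/existsP => -[z /existsP [w /and5P [/eqP cz /eqP cw iz iw ewz]]].
  move: iz iw; rewrite dec // dec //; last by move=> E; apply: cxy.
  move=> /eqP zx /eqP wy; move: ewz; rewrite zx wy => eyx'.
  by case: oH => _ /(_ _ _ exy); rewrite eyx'.
apply/existsP; exists y; apply/existsP; exists x.
rewrite !eqxx exy !dec ?eqxx //; by move=> E; apply: cxy.
Qed.


Section FstarProps.
Variables (h k n : nat) (eH : rel 'I_h) (eD : rel 'I_k) (c : 'I_h -> 'I_k).
Hypothesis oD : oriented eD.
Local Notation F := (Fstar (n := n) eH eD c).

Lemma Fs_same u v : u.1 = v.1 -> F u v = false.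
Proof. by move=> E; rewrite /Fstar E eqxx. Qed.

Lemma Fs_anti u v : F u v -> ~~ F v u.
Proof.
rewrite /Fstar; case: eqP => // /eqP ne; rewrite eq_sym (negbTE ne).
case eD1: (eD u.1 v.1).
  by have := oD.2 _ _ eD1 => /negbTE ->.
case eD2: (eD v.1 u.1) => //.
case: (ltngtP u.1 v.1) => H; rewrite ?negbK //.
by move: ne; rewrite (val_inj H) eqxx.
Qed.

Lemma Fs_tot u v : u.1 <> v.1 -> F u v || F v u.
Proof.
move=> /eqP ne; rewrite /Fstar (negbTE ne) eq_sym (negbTE ne).
case eD1: (eD u.1 v.1) => //; case eD2: (eD v.1 u.1) => //.
case: (ltngtP u.1 v.1) => H; rewrite ?orbN ?orNb //.
by move: ne; rewrite (val_inj H) eqxx.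
Qed.

Lemma Fs_D i j u v : eD i j -> u.1 = i -> v.1 = j -> ~~ F v u.
Proof.
move=> eij ui vj; subst i j; rewrite /Fstar.
case: eqP => // /eqP ne.
by rewrite (negbTE (oD.2 _ _ eij)) eij.
Qed.
End FstarProps.

Lemma seq_choice (X Y : eqType) (Q : X -> Y -> Prop) (L : seq X) :
  (forall x, x \in L -> exists y, Q x y) ->
  exists zs : seq (X * Y), map fst zs = L /\ forall z, z \in zs -> Q z.1 z.2.
Proof.
elim: L => [|x L IH] H; first by exists [::].
have [y Hy] := H x (mem_head _ _).
have [zs [E Hz]] := IH (fun x' hx' => H x' (@mem_behead _ (x :: L) _ hx')).
exists ((x, y) :: zs); split; first by rewrite /= E.
by move=> z; rewrite inE => /orP [/eqP -> | /Hz].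
Qed.

Lemma uniq_fst_inj (X Y : eqType) (zs : seq (X * Y)) z z' :
  uniq (map fst zs) -> z \in zs -> z' \in zs -> z.1 = z'.1 -> z = z'.
Proof.
elim: zs => [|a zs IH] //= /andP [na u]; rewrite !inE.
case/orP => [/eqP ->|zi]; case/orP => [/eqP ->|zi'] //.
- by move=> E; move: na; rewrite E (map_f fst zi').
- by move=> E; move: na; rewrite -E (map_f fst zi).
- exact: IH.
Qed.

Lemma count_le1 (X : eqType) (P : pred X) (zs : seq X) :
  uniq zs -> (forall z z', z \in zs -> z' \in zs -> P z -> P z' -> z = z') ->
  count P zs <= 1.
Proof.
elim: zs => [|a zs IH] //= /andP [na u] H.
case Pa: (P a) => /=.
  rewrite add1n ltnS leqn0 -(negbK (_ == 0)) -lt0n -has_count; apply/negP => /hasP [z zi Pz].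
  have := H a z (mem_head _ _) (@mem_behead _ (a :: zs) _ zi) Pa Pz.
  by move=> E; move: na; rewrite E zi.
apply: IH => // z z' zi zi'; apply: H; exact: (@mem_behead _ (a :: zs)).
Qed.

Lemma solve_at i j a t a' t' : i <> j ->
  a + i * t = a' + i * t' -> a + j * t = a' + j * t' -> a = a' /\ t = t'.
Proof.
move=> ij E1 E2.
have Ht : t = t'.
  case: (ltngtP i j) => H; last by [].
  - have : (j - i) * t = (j - i) * t' by nia.
    by move/eqP; rewrite eqn_mul2l subn_eq0 leqNgt H /= => /eqP.
  - have : (i - j) * t = (i - j) * t' by nia.
    by move/eqP; rewrite eqn_mul2l subn_eq0 leqNgt H /= => /eqP.
by split => //; move: E1; rewrite Ht => /eqP; rewrite eqn_add2r => /eqP.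
Qed.

Lemma cycle_const (T : eqType) (e : rel T) z s :
  s != [::] -> all (fun x => x == z) s -> cycle e s -> e z z.
Proof.
case: s => [|a s] //= _ /andP [/eqP -> al].
case: s al => [|b s] /=; first by rewrite andbT.
by case/andP => /eqP -> _ /andP [].
Qed.

Lemma nonconst h k (eH : rel 'I_h) (eD : rel 'I_k) (c : 'I_h -> 'I_k) :
  2 <= k -> 2 <= h -> oriented eH -> oriented eD -> proper_coloring eH c ->
  (forall i j, eD i j -> arrow eH (fun x => c x == i) (fun x => c x == j)) ->
  exists c' : 'I_h -> 'I_k, exists x0 y0,
   [/\ proper_coloring eH c',
    (forall i j, eD i j -> arrow eH (fun x => c' x == i) (fun x => c' x == j)) &
    c' x0 <> c' y0].
Proof.
move=> k2 h2 oH oD pc Darr.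
case: (boolP [exists x, exists y, c x != c y]).
  case/existsP => x0 /existsP [y0 /eqP ne]; exists c, x0, y0; split => //.
rewrite negb_exists => /forallP allc.
have h0 : 0 < h by apply: leq_trans h2.
pose x0 : 'I_h := Ordinal h0.
have cc : forall x, c x = c x0.
  move=> x; have := allc x; rewrite negb_exists => /forallP /(_ x0).
  by rewrite negbK => /eqP.
pose i := c x0.
have k0 : 0 < k by apply: leq_trans k2.
pose j : 'I_k := if val i == 0 then Ordinal k2 else Ordinal k0.
have ij : i != j.
  rewrite /j; case: (val i =P 0) => H; apply/eqP => /(congr1 val) /=.
    by rewrite H.
  by move=> E; apply: H.
pose snk := [arg max_(x > x0) key eH c x].
pose src := [arg min_(x < x0) key eH c x].
have snkP : forall y, ~~ eH snk y.
  move=> y; apply/negP => e.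
  have := key_lt pc e (etrans (cc _) (esym (cc _))).
  rewrite /snk; case: arg_maxnP => // s _ Hs /leq_trans /(_ (Hs y isT)).
  by rewrite ltnn.
have srcP : forall y, ~~ eH y src.
  move=> y; apply/negP => e.
  have := key_lt pc e (etrans (cc _) (esym (cc _))).
  rewrite /src; case: arg_minnP => // s _ Hs.
  by move=> /leq_trans /(_ (Hs y isT)); rewrite ltnn.
pose z := if eD j i then src else snk.
pose c' x := if x == z then j else i.
have c'i : forall x, (c' x == i) = (x != z).
  move=> x; rewrite /c'; case: (x =P z) => _ /=; last by rewrite eqxx.
  by apply: negbTE; rewrite eq_sym.
have c'j : forall x, (c' x == j) = (x == z).
  move=> x; rewrite /c'; case: (x =P z) => _ /=; first by rewrite eqxx.
  exact: negbTE.
have h1 : 1 < h by [].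
pose w : 'I_h := if z == x0 then Ordinal h1 else x0.
have wz : w != z.
  rewrite /w; case: (z =P x0) => [E|/eqP ne]; last by rewrite eq_sym.
  by rewrite E; apply/eqP => /(congr1 val).
exists c', z, w; split.
- move=> t s sne als.
  case: (eqVneq t j) => [tj|tj].
    apply/negP => cyc.
    have : eH z z.
      apply: (cycle_const sne _ cyc); apply: sub_all als => x; by rewrite tj c'j.
    by rewrite (negbTE (oH.1 z)).
  by apply: (@pc i s sne); apply/allP => x _; rewrite cc.
- move=> a b eab x y /eqP cxa /eqP cyb.
  have ab : a != b by apply/eqP => E; move: eab; rewrite E (negbTE (oD.1 b)).
  have cx : c' x = i \/ c' x = j by rewrite /c'; case: eqP; [right|left].
  have cy : c' y = i \/ c' y = j by rewrite /c'; case: eqP; [right|left].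
  case: cx cy => [] cx [] cy; move: cxa cyb; rewrite cx cy => ea eb; subst a b.
  + by rewrite eqxx in ab.
  + have yz : y = z by apply/eqP; rewrite -c'j cy.
    have xz : x != z by rewrite -c'i cx.
    have nji : ~~ eD j i by apply: oD.2.
    by rewrite yz /z (negbTE nji) snkP.
  + have xz : x = z by apply/eqP; rewrite -c'j cx.
    by rewrite xz /z eab srcP.
  + by rewrite eqxx in ab.
- rewrite /c' eqxx (negbTE wz) => /eqP; by rewrite eq_sym (negbTE ij).
Qed.
From Stdlib Require Import Lra.

Lemma real_bound (X m M : nat) : 0 < X -> m <= X * M ->
  Rle (Rmult (Rinv (pow (INR X) 2)) (pow (INR m) 2)) (INR (M * M)).
Proof.
move=> X0 hm.
have HX : (0 < INR X)%R by apply: lt_0_INR; apply/ltP.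
have Hm : (INR m <= INR X * INR M)%R.
  rewrite -mult_INR; apply: le_INR; apply/leP; exact: hm.
have H0 : (0 <= INR m)%R by apply: pos_INR.
change (M * M)%N with (M * M)%coq_nat; rewrite mult_INR.
apply: (Rmult_le_reg_l (pow (INR X) 2)); first by apply: pow_lt.
rewrite -Rmult_assoc Rinv_r; last by apply: pow_nonzero; lra.
rewrite Rmult_1_l /=; nra.
Qed.


Lemma emb_bound a t j r k M NP m : a < M -> t < M -> j < k -> r < NP ->
  M * (k * NP) <= m -> (a + j * t) * NP + r < m.
Proof.
move=> aM tM jk rN hm.
have ut : j * t <= (k - 1) * (M - 1) by apply: leq_mul; lia.
have s1 : a + j * t + 1 <= k * M.
  have : (k - 1) * (M - 1) + M <= k * M by nia.
  lia.
have s2 : (a + j * t + 1) * NP <= k * M * NP by apply: leq_mul.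
have s3 : (a + j * t) * NP + r < (a + j * t + 1) * NP by rewrite [(_ + 1) * _]mulnDl mul1n ltn_add2l.
rewrite mulnA [M * k]mulnC in hm.
exact: leq_trans s3 (leq_trans s2 hm).
Qed.

Lemma nat_fact m h k NP : 0 < NP -> 1 <= k -> k <= h -> 2 * h * NP <= m ->
  m <= 2 * h * NP * (m %/ (k * NP)).
Proof.
move=> NP0 k1 kh hm.
have d0 : 0 < k * NP by rewrite muln_gt0 NP0 andbT.
have E := divn_eq m (k * NP).
have R := ltn_pmod m d0.
move: E R; set M := m %/ (k * NP); set r := m %% (k * NP) => E R.
have kNP : k * NP <= h * NP by rewrite leq_mul2r kh orbT.
have M1 : 1 <= M.
  case: M E => [|M'] // E; move: hm; rewrite E mul0n add0n => hm.
  have : 2 * h * NP <= h * NP by apply: leq_trans hm (leq_trans (ltnW R) kNP).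
  have : 0 < h * NP by apply: leq_trans kNP; rewrite muln_gt0 k1.
  lia.
have : m < (M + 1) * (k * NP) by rewrite E mulnDl mul1n ltn_add2l.
have : (M + 1) * (k * NP) <= (M + 1) * (h * NP) by rewrite leq_mul2l kNP orbT.
have : (M + 1) * (h * NP) <= (2 * M) * (h * NP) by apply: leq_mul; lia.
nia.
Qed.

Section Blowup.
Variables (P : finType) (h k : nat) (eH : rel 'I_h) (eD : rel 'I_k) (c' : 'I_h -> 'I_k).
Variable Fs : rel ('I_k * P).
Hypothesis Fs_same' : forall u v, u.1 = v.1 -> Fs u v = false.
Hypothesis Fs_anti' : forall u v, Fs u v -> ~~ Fs v u.
Hypothesis Fs_tot' : forall u v, u.1 <> v.1 -> Fs u v || Fs v u.
Hypothesis Fs_D' : forall i j u v, eD i j -> u.1 = i -> v.1 = j -> ~~ Fs v u.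
Hypothesis Hcore' : forall T : rel ('I_k * P),
  (forall u v, u <> v -> T u v || T v u) ->
  (forall u v, u.1 <> v.1 -> T u v = Fs u v) ->
  exists psi : {ffun 'I_h -> 'I_k * P}, is_copy eH T psi /\ forall x, (psi x).1 = c' x.
Variables (x0 y0 : 'I_h).
Hypothesis cxy : c' x0 <> c' y0.
Hypothesis kh : k <= h.
Hypothesis k2 : 2 <= k.
Hypothesis NP0 : 0 < #|P|.

Lemma blowup (m' : nat) : 2 * h * #|P| <= m'.+1 ->
  exists eF : rel ('I_k * 'I_m'.+1),
    kpartite_tournament eF /\
    (forall i j, eD i j -> arrow eF (fun u => u.1 == i) (fun u => u.1 == j)) /\
    forall eT : rel ('I_k * 'I_m'.+1), completion eF eT ->
    exists s : seq {ffun 'I_h -> 'I_k * 'I_m'.+1},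
      (forall phi, phi \in s -> is_copy eH eT phi) /\
      uniq [seq (copy_vertices phi, copy_edges eH phi) | phi <- s] /\
      Rle (Rmult (Rinv (pow (INR (2 * h * #|P|)) 2)) (pow (INR m'.+1) 2)) (INR (size s)) /\
      (forall u v, eF u v ->
         count (fun phi => (u, v) \in copy_edges eH phi) s <= 1).
Proof.
move=> hm.
pose NP := #|P|.
pose X := 2 * h * NP.
pose pt (u : 'I_m'.+1) : P := enum_val (Ordinal (ltn_pmod u NP0)).
pose eF : rel ('I_k * 'I_m'.+1) := fun u v => Fs (u.1, pt u.2) (v.1, pt v.2).
exists eF; split; [|split].
- split; [split|split].
  + by move=> u; rewrite /eF Fs_same'.
  + by move=> u v; rewrite /eF; apply: Fs_anti'.
  + by move=> u v E; rewrite /eF Fs_same'.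
  + by move=> u v E; rewrite /eF; apply: Fs_tot'.
- move=> i j eij u v ui vj; rewrite /eF.
  exact: (@Fs_D' i j (u.1, pt u.2) (v.1, pt v.2) eij (eqP ui) (eqP vj)).
move=> eT [oT [totT agT]].
pose M := m'.+1 %/ (k * NP).
have MkN : M * (k * NP) <= m'.+1 by apply: leq_divM.
pose emb (a t : nat) (u : 'I_k * P) : 'I_k * 'I_m'.+1 :=
  (u.1, inord ((a + u.1 * t) * NP + enum_rank u.2)).
have embv : forall a t u, a < M -> t < M ->
    val (emb a t u).2 = (a + u.1 * t) * NP + enum_rank u.2.
  move=> a t u aM tM; apply: inordK.
  exact: emb_bound aM tM (ltn_ord _) (ltn_ord _) MkN.
have blk : forall a t u, a < M -> t < M -> val (emb a t u).2 %/ NP = a + u.1 * t.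
  move=> a t u aM tM; rewrite embv // divnMDl // divn_small ?addn0 //; exact: ltn_ord.
have ptemb : forall a t u, a < M -> t < M -> pt (emb a t u).2 = u.2.
  move=> a t u aM tM; rewrite /pt.
  suff -> : Ordinal (ltn_pmod (emb a t u).2 NP0) = enum_rank u.2 by rewrite enum_rankK.
  apply: val_inj; rewrite /= embv // modnMDl modn_small //; exact: ltn_ord.
have emb_inj : forall a t, a < M -> t < M -> injective (emb a t).
  move=> a t aM tM [u1 u2] [v1 v2] E.
  have E1 : u1 = v1 by move/(congr1 fst): E.
  have E2 : val (emb a t (u1, u2)).2 = val (emb a t (v1, v2)).2 by rewrite E.
  rewrite (embv a t (u1, u2) aM tM) (embv a t (v1, v2) aM tM) /= E1 in E2.
  move/eqP: E2; rewrite eqn_add2l => /eqP /val_inj /(can_inj enum_rankK) E2.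
  by rewrite E1 E2.
have Tat : forall a t, a < M -> t < M -> exists psi : {ffun 'I_h -> 'I_k * P},
    is_copy eH (fun u v => eT (emb a t u) (emb a t v)) psi /\ forall x, (psi x).1 = c' x.
  move=> a t aM tM; apply: Hcore'.
    move=> u v uv; apply: totT => E; apply: uv; exact: (emb_inj a t aM tM).
  move=> u v uv; rewrite agT; last by [].
  by rewrite /eF !ptemb //; case: u uv => [u1 u2]; case: v => [v1 v2].
pose L := [seq (a, t) | a <- iota 0 M, t <- iota 0 M].
have LM : forall z, z \in L -> z.1 < M /\ z.2 < M.
  move=> z /allpairsP [[a t] /= [aI tI ->]]; move: aI tI; rewrite !mem_iota /=.
  by move=> aM tM; split.
have [zs [zsL Hzs]] := @seq_choice _ {ffun 'I_h -> 'I_k * P}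
  (fun zz psi => is_copy eH (fun u v => eT (emb zz.1 zz.2 u) (emb zz.1 zz.2 v)) psi /\
     forall x, (psi x).1 = c' x) L
  (fun z zL => Tat z.1 z.2 (LM z zL).1 (LM z zL).2).
have zsM : forall z, z \in zs -> z.1.1 < M /\ z.1.2 < M.
  by move=> z zi; apply: LM; rewrite -zsL; exact: map_f.
pose phi (z : (nat * nat) * {ffun 'I_h -> 'I_k * P}) : {ffun 'I_h -> 'I_k * 'I_m'.+1} :=
  [ffun x => emb z.1.1 z.1.2 (z.2 x)].
have phi1 : forall z x, z \in zs -> (phi z x).1 = c' x.
  by move=> z x zi; rewrite ffunE /=; exact: (Hzs z zi).2.
have phib : forall z x, z \in zs -> val (phi z x).2 %/ NP = z.1.1 + c' x * z.1.2.
  move=> z x zi; have [aM tM] := zsM z zi.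
  by rewrite ffunE blk // (Hzs z zi).2.
have uL : uniq L.
  apply: allpairs_uniq; [exact: iota_uniq | exact: iota_uniq |].
  by move=> [a t] [a' t'] _ _.
have uzs : uniq zs by apply: (map_uniq (f := fst)); rewrite zsL.
have same : forall z z' u v, z \in zs -> z' \in zs -> u.1 <> v.1 ->
    (exists x, u = phi z x) -> (exists y, v = phi z y) ->
    (exists x, u = phi z' x) -> (exists y, v = phi z' y) -> z = z'.
  move=> z z' u v zi zi' uv [x Ex] [y Ey] [x' E1] [y' E2].
  apply: (uniq_fst_inj (zs := zs)) => //; first by rewrite zsL.
  have cx : c' x' = c' x by rewrite -(phi1 z' x' zi') -E1 Ex phi1.
  have cy : c' y' = c' y by rewrite -(phi1 z' y' zi') -E2 Ey phi1.
  have b1 : z.1.1 + c' x * z.1.2 = z'.1.1 + c' x * z'.1.2.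
    by rewrite -(phib z x zi) -Ex E1 phib // cx.
  have b2 : z.1.1 + c' y * z.1.2 = z'.1.1 + c' y * z'.1.2.
    by rewrite -(phib z y zi) -Ey E2 phib // cy.
  have cxy' : c' x <> c' y by rewrite -(phi1 z x zi) -(phi1 z y zi) -Ex -Ey.
  have [ea et] := solve_at (fun E => cxy' (val_inj E)) b1 b2.
  by rewrite [z.1]surjective_pairing [z'.1]surjective_pairing ea et.
exists (map phi zs); split; [|split; [|split]].
- move=> f /mapP [z zi ->]; have [[inj ed] _] := Hzs z zi; have [aM tM] := zsM z zi.
  split.
    by move=> x y; rewrite !ffunE => /(emb_inj _ _ aM tM) /inj.
  by move=> x y exy; rewrite !ffunE; exact: ed.
- apply: (map_uniq (f := fst)); rewrite -!map_comp.
  rewrite map_inj_in_uniq //.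
  move=> z z' zi zi' /= E.
  have hx : phi z x0 \in copy_vertices (phi z') by rewrite -E; apply: imset_f.
  have hy : phi z y0 \in copy_vertices (phi z') by rewrite -E; apply: imset_f.
  case/imsetP: hx => x' _ ex'; case/imsetP: hy => y' _ ey'.
  apply: (same z z' (phi z x0) (phi z y0)) => //.
  + by rewrite !phi1.
  + by exists x0.
  + by exists y0.
  + by exists x'.
  + by exists y'.
- rewrite size_map.
  have -> : size zs = size L by rewrite -zsL size_map.
  rewrite size_allpairs size_iota.
  have h0' : 0 < h by apply: leq_trans kh; apply: leq_trans k2.
  have k1 : 1 <= k by apply: leq_trans k2.
  apply: real_bound; first by rewrite !muln_gt0 h0' NP0.
  exact: nat_fact NP0 k1 kh hm.
- move=> u v euv; rewrite count_map.
  have uv : u.1 <> v.1 by move=> E; move: euv; rewrite /eF Fs_same'.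
  apply: count_le1 uzs _ => z z' zi zi' /= Pz Pz'.
  case/imsetP: Pz => [[p1 p2] _ /= [E1 E2]].
  case/imsetP: Pz' => [[q1 q2] _ /= [E3 E4]].
  apply: (same z z' u v) => //.
  + by exists p1.
  + by exists p2.
  + by exists q1.
  + by exists q2.
Qed.
End Blowup.

Unset Implicit Arguments.

Theorem lemma2p1 :
  forall h : nat, 2 <= h ->
  exists (m0 : nat) (gamma : R), Rlt 0 gamma /\
  forall (eH : rel 'I_h), oriented eH ->
  forall k : nat, 2 <= k -> k <= h ->
  forall (eD : rel 'I_k), oriented eD ->
  forall (c : 'I_h -> 'I_k), proper_coloring eH c ->
  (forall i j, eD i j -> arrow eH (fun x => c x == i) (fun x => c x == j)) ->
  forall m : nat, m0 <= m ->
  exists eF : rel ('I_k * 'I_m),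
    kpartite_tournament eF /\
    (forall i j, eD i j -> arrow eF (fun u => u.1 == i) (fun u => u.1 == j)) /\
    forall eT : rel ('I_k * 'I_m), completion eF eT ->
    exists s : seq {ffun 'I_h -> 'I_k * 'I_m},
      (forall phi, phi \in s -> is_copy eH eT phi) /\
      uniq [seq (copy_vertices phi, copy_edges eH phi) | phi <- s] /\
      Rle (Rmult gamma (pow (INR m) 2)) (INR (size s)) /\
      (forall u v, eF u v ->
         count (fun phi => (u, v) \in copy_edges eH phi) s <= 1).
Proof.
move=> h h2.
have h0 : 0 < h by apply: leq_trans h2.
have [n Hcore] := core h0.
pose P := {ffun 'I_(h+h) -> 'I_n.+1}.
have NP0 : 0 < #|P| by apply/card_gt0P; exists [ffun => ord0].
have X0 : 0 < 2 * h * #|P| by rewrite !muln_gt0 h0 NP0.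
exists (2 * h * #|P|), (Rinv (pow (INR (2 * h * #|P|)) 2)); split.
  by apply: Rinv_0_lt_compat; apply: pow_lt; apply: lt_0_INR; apply/ltP.
move=> eH oH k k2 kh eD oD c pc Darr m hm.
have [c' [x0 [y0 [pc' Darr' cxy]]]] := nonconst k2 h2 oH oD pc Darr.
case: m hm => [|m'] hm.
  by move: hm; rewrite leqn0 => /eqP X00; move: X0; rewrite X00.
apply: (@blowup P h k eH eD c' (Fstar eH eD c') _ _ _ _ _ x0 y0 cxy kh k2 NP0 m' hm).
- by move=> u v E; apply: Fs_same.
- by move=> u v; apply: Fs_anti.
- by move=> u v; apply: Fs_tot.
- by move=> i j u v; apply: Fs_D.
- by move=> T Ttot Tcross; apply: (Hcore k kh eH eD c' oH oD pc' Darr' T Ttot Tcross).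
Qed.
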